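(* Neither the inequality $I(a,b)>S\big(A(a,b),G(a,b)\big)$ nor the inequality $I(a,b)<S\big(A(a,b),G(a,b)\big)$ holds for all distinct positive reals $a,b$. On the other hand, for all distinct positive reals $a,b$, writing $A=A(a,b)$, $G=G(a,b)$, $I=I(a,b)$, $Q=Q(a,b)$, one has $$S(Q,G)>A>I\qquad\text{and}\qquad I(Q,G)<A.$$
   Context: For positive reals $x,y$: $A(x,y)=\frac{x+y}{2}$, $G(x,y)=\sqrt{xy}$, root square mean $Q(x,y)=\sqrt{(x^2+y^2)/2}$, $S(x,y)=(x^xy^y)^{1/(x+y)}$, and for $x\neq y$ the identric mean $I(x,y)=\frac{1}{e}\left(\frac{x^x}{y^y}\right)^{1/(x-y)}$. *)

(* Defs.v *)
From Stdlib Require Import Reals.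
Open Scope R_scope.

Definition Amean (x y : R) : R := (x + y) / 2.
Definition Gmean (x y : R) : R := sqrt (x * y).
Definition Qmean (x y : R) : R := sqrt ((x ^ 2 + y ^ 2) / 2).
Definition Smean (x y : R) : R :=
  Rpower (Rpower x x * Rpower y y) (/ (x + y)).
Definition Imean (x y : R) : R :=
  / exp 1 * Rpower (Rpower x x / Rpower y y) (/ (x - y)).

(* Main.v *)
Require Import Defs.
From Stdlib Require Import Reals Lra.
From Coquelicot Require Import Coquelicot.
Open Scope R_scope.

Lemma exp_n : forall n x, exp (INR n * x) = exp x ^ n.
Proof.
  induction n; intros x. simpl. rewrite Rmult_0_l. apply exp_0.
  rewrite S_INR. replace ((INR n + 1) * x) with (INR n * x + x) by ring.
  rewrite exp_plus, IHn. simpl. ring.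
Qed.

Lemma e20 : exp (1/20) < 20/19.
Proof.
  assert (H := exp_ineq1 (-(1/20)) ltac:(lra)).
  assert (H2 : exp (1/20) * exp (-(1/20)) = 1).
  { rewrite <- exp_plus. replace (1/20 + - (1/20)) with 0 by ring. apply exp_0. }
  assert (0 < exp (1/20)) by apply exp_pos. nra.
Qed.

Lemma e85 : exp (8/5) < 27/5.
Proof.
  replace (8/5) with (INR 32 * (1/20)) by (simpl; lra).
  rewrite exp_n.
  assert (H := e20). assert (0 < exp (1/20)) by apply exp_pos.
  apply Rle_lt_trans with ((20/19)^32).
  apply pow_incr; lra. simpl; lra.
Qed.

Lemma ln2_lt : ln 2 < 3/4.
Proof.
  assert (H : 2 < exp (3/4)).
  { replace (3/4) with (INR 6 * (1/8)) by (simpl; lra). rewrite exp_n.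
    assert (H := exp_ineq1 (1/8) ltac:(lra)).
    apply Rlt_le_trans with ((1 + 1/8)^6). simpl; lra. apply pow_incr; lra. }
  rewrite <- (ln_exp (3/4)). apply ln_increasing; lra.
Qed.

Lemma Sm_eq : forall x y, 0 < x -> 0 < y ->
  Smean x y = exp ((x * ln x + y * ln y) / (x + y)).
Proof.
  intros x y Hx Hy. unfold Smean, Rpower.
  rewrite <- exp_plus, ln_exp. f_equal. field. lra.
Qed.

Lemma Im_eq : forall a b, 0 < a -> 0 < b -> a <> b ->
  Imean a b = exp ((a * ln a - b * ln b) / (a - b) - 1).
Proof.
  intros a b Ha Hb Hab. unfold Imean, Rpower.
  rewrite ln_div by apply exp_pos. rewrite !ln_exp.
  rewrite <- exp_Ropp, <- exp_plus. f_equal. field. lra.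
Qed.

Lemma cex1 : Imean 2 2048 < Smean (Amean 2 2048) (Gmean 2 2048).
Proof.
  unfold Amean, Gmean.
  replace ((2+2048)/2) with 1025 by lra.
  replace (2 * 2048) with (64 * 64) by lra. rewrite sqrt_square by lra.
  rewrite Im_eq, Sm_eq by lra. apply exp_increasing.
  assert (E1 : ln 2048 = 11 * ln 2).
  { replace 2048 with (2^11) by (simpl; lra). rewrite ln_pow by lra. simpl; lra. }
  assert (E2 : ln 64 = 6 * ln 2).
  { replace 64 with (2^6) by (simpl; lra). rewrite ln_pow by lra. simpl; lra. }
  assert (E3 : 10 * ln 2 <= ln 1025).
  { replace (10 * ln 2) with (ln (2^10)) by (rewrite ln_pow by lra; simpl; lra).
    apply ln_le; simpl; lra. }
  rewrite E1, E2. assert (H := ln2_lt).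
  apply Rlt_le_trans with ((1025 * (10 * ln 2) + 64 * (6 * ln 2)) / (1025 + 64)).
  unfold Rdiv. lra.
  apply Rmult_le_compat_r. lra. lra.
Qed.

Lemma cex2 : Imean 1 9 > Smean (Amean 1 9) (Gmean 1 9).
Proof.
  unfold Amean, Gmean.
  replace ((1+9)/2) with 5 by lra.
  replace (1 * 9) with (3 * 3) by lra. rewrite sqrt_square by lra.
  rewrite Im_eq, Sm_eq by lra. apply exp_increasing.
  assert (E1 : ln 9 = 2 * ln 3).
  { replace 9 with (3^2) by (simpl; lra). rewrite ln_pow by lra. simpl; lra. }
  assert (E2 : 8/5 < 3 * ln 3 - ln 5).
  { replace (3 * ln 3 - ln 5) with (ln (27/5)).
    rewrite <- (ln_exp (8/5)). apply ln_increasing. apply exp_pos. apply e85.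
    rewrite ln_div by lra. replace 27 with (3^3) by (simpl; lra). rewrite ln_pow by lra. simpl; lra. }
  rewrite ln_1, E1. unfold Rdiv. lra.
Qed.

Lemma incr : forall f f' a b, a < b ->
  (forall c, a <= c <= b -> is_derive f c (f' c)) ->
  (forall c, a < c < b -> 0 < f' c) -> f a < f b.
Proof.
  intros f f' a b Hab Hd Hp.
  destruct (MVT_cor2 f f' a b Hab) as [c [Hc1 Hc2]].
  intros c Hc. apply is_derive_Reals. auto.
  assert (0 < f' c) by (apply Hp; lra). nra.
Qed.

Lemma ln_lt_lin : forall z, 0 < z -> z <> 1 -> ln z < z - 1.
Proof.
  intros z Hz H1. assert (H0 : ln z <> 0) by (apply ln_neq_0; auto).
  assert (H := exp_ineq1 (ln z) H0). rewrite exp_ln in H; lra.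
Qed.

Definition kk z := (ln z / 2 + 1) / sqrt z.

Lemma dk : forall z, 0 < z -> is_derive kk z (- ln z / (4 * z * sqrt z)).
Proof.
  intros z Hz. unfold kk. auto_derive.
  assert (0 < sqrt z) by (apply sqrt_lt_R0; lra). repeat split; lra.
  rewrite sqrt_sqrt by lra.
  assert (0 < sqrt z) by (apply sqrt_lt_R0; lra). field. lra.
Qed.

Definition gp y := kk (1 + y) - kk (1 - y).
Definition gpp y := - ln (1 + y) / (4 * (1 + y) * sqrt (1 + y))
                    + - ln (1 - y) / (4 * (1 - y) * sqrt (1 - y)).

Lemma dgp : forall y, -1 < y < 1 -> is_derive gp y (gpp y).
Proof.
  intros y Hy. unfold gp, gpp.
  replace (- ln (1 + y) / (4 * (1 + y) * sqrt (1 + y)) +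
   - ln (1 - y) / (4 * (1 - y) * sqrt (1 - y))) with
   (1 * (- ln (1 + y) / (4 * (1 + y) * sqrt (1 + y))) -
   ((-1) * (- ln (1 - y) / (4 * (1 - y) * sqrt (1 - y))))) by ring.
  apply (is_derive_minus (fun y => kk (1 + y)) (fun y => kk (1 - y))).
  - apply (is_derive_comp kk (fun y => 1 + y)). apply dk; lra.
    auto_derive; auto; ring.
  - apply (is_derive_comp kk (fun y => 1 - y)). apply dk; lra.
    auto_derive; auto; ring.
Qed.

Lemma gpp_pos : forall y, 0 < y < 1 -> 0 < gpp y.
Proof.
  intros y Hy. unfold gpp.
  assert (s1 : 1 < sqrt (1 + y)).
  { assert (HH : sqrt 1 < sqrt (1+y)) by (apply sqrt_lt_1; lra). rewrite sqrt_1 in HH; lra. }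
  assert (s2 : 0 < sqrt (1 - y) < 1).
  { split. apply sqrt_lt_R0; lra.
    assert (HH : sqrt (1-y) < sqrt 1) by (apply sqrt_lt_1; lra). rewrite sqrt_1 in HH; lra. }
  assert (l1 : ln (1 + y) < y) by (assert (HH:=ln_lt_lin (1+y)); lra).
  assert (l1' : 0 < ln (1 + y)) by (rewrite <- ln_1; apply ln_increasing; lra).
  assert (l2 : ln (1 - y) < - y) by (assert (HH:=ln_lt_lin (1-y)); lra).
  set (D1 := (1 + y) * sqrt (1 + y)). set (D2 := (1 - y) * sqrt (1 - y)).
  assert (HD1 : 1 < D1) by (unfold D1; nra).
  assert (HD2 : 0 < D2 < 1) by (unfold D2; split; nra).
  assert (A1 : ln (1 + y) / D1 < y).
  { apply Rmult_lt_reg_r with D1. lra. unfold Rdiv; rewrite Rmult_assoc, Rinv_l by lra. nra. }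
  assert (A2 : y < - ln (1 - y) / D2).
  { apply Rmult_lt_reg_r with D2. lra. unfold Rdiv; rewrite Rmult_assoc, Rinv_l by lra. nra. }
  replace (- ln (1 + y) / (4 * (1 + y) * sqrt (1 + y))) with (- (ln (1 + y) / D1) / 4)
    by (unfold D1; field; lra).
  replace (- ln (1 - y) / (4 * (1 - y) * sqrt (1 - y))) with ((- ln (1 - y) / D2) / 4)
    by (unfold D2; field; lra).
  lra.
Qed.

Lemma gp_pos : forall y, 0 < y < 1 -> 0 < gp y.
Proof.
  intros y Hy.
  replace 0 with (gp 0) by (unfold gp; rewrite Rplus_0_r, Rminus_0_r; ring).
  apply (incr gp gpp 0 y). lra.
  intros c Hc. apply dgp; lra.
  intros c Hc. apply gpp_pos; lra.
Qed.

Definition gg y := sqrt (1 + y) * ln (1 + y) + sqrt (1 - y) * ln (1 - y).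

Lemma dgg : forall y, -1 < y < 1 -> is_derive gg y (gp y).
Proof.
  intros y Hy. unfold gg, gp, kk. auto_derive.
  assert (0 < sqrt (1+y)) by (apply sqrt_lt_R0; lra).
  assert (0 < sqrt (1-y)) by (apply sqrt_lt_R0; lra).
  repeat split; lra.
  assert (0 < sqrt (1+y)) by (apply sqrt_lt_R0; lra).
  assert (0 < sqrt (1-y)) by (apply sqrt_lt_R0; lra).
  assert (E1 : sqrt (1+y) * sqrt (1+y) = 1 + y) by (apply sqrt_sqrt; lra).
  assert (E2 : sqrt (1-y) * sqrt (1-y) = 1 - y) by (apply sqrt_sqrt; lra).
  replace (1 + - y) with (1 - y) by ring.
  set (s := sqrt (1+y)) in *. set (t := sqrt (1-y)) in *.
  set (L1 := ln (1+y)). set (L2 := ln (1-y)).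
  rewrite <- E1, <- E2. field. lra.
Qed.

Lemma gg_pos : forall y, 0 < y < 1 -> 0 < gg y.
Proof.
  intros y Hy.
  replace 0 with (gg 0) by (unfold gg; rewrite Rplus_0_r, Rminus_0_r, ln_1; ring).
  apply (incr gg gp 0 y). lra.
  intros c Hc. apply dgg; lra.
  intros c Hc. apply gp_pos; lra.
Qed.

Lemma IA_lt : forall a b, 0 < a -> a < b ->
  (a * ln a - b * ln b) / (a - b) - 1 < ln ((a + b) / 2).
Proof.
  intros a b Ha Hab.
  set (phi := fun y => -(y * ln y - a * ln a - (y - a) - (y - a) * ln ((a + y) / 2))).
  assert (Hlt : phi a < phi b).
  { apply (incr phi (fun y => -(ln y - ln ((a + y) / 2) - (y - a) / (a + y))) a b Hab).
    - intros c Hc. unfold phi. auto_derive. repeat split; lra.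
      unfold Rdiv. field. lra.
    - intros c Hc.
      assert (ln c - ln ((a + c) / 2) < (c - a) / (a + c)).
      { rewrite <- ln_div by lra.
        replace ((c - a) / (a + c)) with (c / ((a + c) / 2) - 1) by (field; lra).
        apply ln_lt_lin. apply Rdiv_lt_0_compat; lra.
        intro E. assert (c = (a+c)/2). { apply (Rmult_eq_reg_r (/ ((a+c)/2))).
          rewrite Rinv_r by lra. exact E. apply Rinv_neq_0_compat; lra. } lra. }
      lra. }
  unfold phi in Hlt. cbv beta in Hlt.
  replace (a - a) with 0 in Hlt by ring.
  set (X := (a * ln a - b * ln b) / (a - b)).
  assert (HX : X * (b - a) = b * ln b - a * ln a) by (unfold X; field; lra).
  assert (H2 : (X - 1 - ln ((a+b)/2)) * (b - a) < 0) by nra.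
  assert (0 < b - a) by lra. nra.
Qed.

Lemma IA : forall a b, 0 < a -> 0 < b -> a <> b -> Imean a b < Amean a b.
Proof.
  intros a b Ha Hb Hab. rewrite Im_eq by auto. unfold Amean.
  rewrite <- (exp_ln ((a+b)/2)) by lra. apply exp_increasing.
  destruct (Rlt_or_le a b) as [H|H].
  - apply IA_lt; auto.
  - replace ((a * ln a - b * ln b) / (a - b)) with ((b * ln b - a * ln a) / (b - a)) by (field; lra).
    replace ((a + b) / 2) with ((b + a) / 2) by lra. apply IA_lt; lra.
Qed.

Lemma pq_pos : forall p q, 0 < p -> 0 < q -> p * p + q * q = 2 -> q < p ->
  0 < p * ln p + q * ln q.
Proof.
  intros p q Hp Hq E Hqp.
  assert (Hy : 0 < p * p - 1 < 1) by nra.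
  assert (H := gg_pos _ Hy). unfold gg in H.
  replace (1 + (p * p - 1)) with (p * p) in H by ring.
  replace (1 - (p * p - 1)) with (q * q) in H by lra.
  rewrite !sqrt_square in H by lra. rewrite !ln_mult in H by lra. lra.
Qed.

Lemma pq_pos' : forall p q, 0 < p -> 0 < q -> p * p + q * q = 2 -> p <> q ->
  0 < p * ln p + q * ln q.
Proof.
  intros p q Hp Hq E Hpq. destruct (Rlt_or_le q p).
  apply pq_pos; auto.
  rewrite Rplus_comm. apply pq_pos; lra.
Qed.

Theorem theorem4 :
  (~ (forall a b : R, 0 < a -> 0 < b -> a <> b ->
        Imean a b > Smean (Amean a b) (Gmean a b))) /\
  (~ (forall a b : R, 0 < a -> 0 < b -> a <> b ->
        Imean a b < Smean (Amean a b) (Gmean a b))) /\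
  (forall a b : R, 0 < a -> 0 < b -> a <> b ->
     Smean (Qmean a b) (Gmean a b) > Amean a b /\
     Amean a b > Imean a b /\
     Imean (Qmean a b) (Gmean a b) < Amean a b).
Proof.
  split; [|split].
  - intro H. assert (H1 := H 2 2048 ltac:(lra) ltac:(lra) ltac:(lra)).
    assert (H2 := cex1). lra.
  - intro H. assert (H1 := H 1 9 ltac:(lra) ltac:(lra) ltac:(lra)).
    assert (H2 := cex2). lra.
  - intros a b Ha Hb Hab.
    set (Q := Qmean a b). set (G := Gmean a b).
    assert (HQ2 : Q * Q = (a * a + b * b) / 2).
    { unfold Q, Qmean. rewrite sqrt_sqrt. simpl; field. simpl; nra. }
    assert (HG2 : G * G = a * b).
    { unfold G, Gmean. rewrite sqrt_sqrt; nra. }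
    assert (HQ : 0 < Q). { unfold Q, Qmean. apply sqrt_lt_R0. simpl; nra. }
    assert (HG : 0 < G). { unfold G, Gmean. apply sqrt_lt_R0. nra. }
    assert (HQG : Q <> G).
    { intro E. assert (Q * Q - G * G = 0) by (rewrite E; ring).
      assert ((a - b) * (a - b) = 0) by nra.
      apply Hab. nra. }
    split; [|split].
    + rewrite Sm_eq by auto. unfold Amean.
      set (A := (a + b) / 2). assert (HA : 0 < A) by (unfold A; lra).
      rewrite <- (exp_ln A) by lra. apply exp_increasing.
      set (p := Q / A). set (q := G / A).
      assert (Hp : 0 < p) by (unfold p; apply Rdiv_lt_0_compat; lra).
      assert (Hq : 0 < q) by (unfold q; apply Rdiv_lt_0_compat; lra).
      assert (E : p * p + q * q = 2).
      { unfold p, q. replace (Q / A * (Q / A) + G / A * (G / A)) with ((Q * Q + G * G) / (A * A))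
          by (field; lra). rewrite HQ2, HG2. unfold A. field. lra. }
      assert (Hpq : p <> q).
      { intro E2. apply HQG. unfold p, q in E2.
        apply (Rmult_eq_reg_r (/ A)). exact E2. apply Rinv_neq_0_compat; lra. }
      assert (K := pq_pos' p q Hp Hq E Hpq).
      assert (EQ : Q = A * p) by (unfold p; field; lra).
      assert (EG : G = A * q) by (unfold q; field; lra).
      assert (LQ : ln Q = ln A + ln p) by (rewrite EQ; apply ln_mult; lra).
      assert (LG : ln G = ln A + ln q) by (rewrite EG; apply ln_mult; lra).
      rewrite LQ, LG.
      apply Rmult_lt_reg_r with (Q + G). lra.
      unfold Rdiv. rewrite Rmult_assoc, Rinv_l by lra. rewrite Rmult_1_r.
      rewrite EQ, EG. nra.
    + apply IA; auto.
    + apply Rlt_le_trans with (Amean Q G). apply IA; auto.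
      unfold Amean. 
      assert ((Q + G) * (Q + G) <= (a + b) * (a + b)) by nra.
      nra.
Qed.
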